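(* Let $V=\{1,\dots,n\}$ and let $f_z:\{0,1\}^n\to\mathbb{R}_+$ be a set function (identified with a function of binary vectors). Suppose there is a sequence of polynomials $\{\hat f_z^L\}_{L\ge1}$, $\hat f_z^L:\mathbb{R}^n\to\mathbb{R}$, and numbers $\varepsilon_z(L)\ge 0$ with $\lim_{L\to\infty}\varepsilon_z(L)=0$ such that $|f_z(\mathbf{x})-\hat f_z^L(\mathbf{x})|\le \varepsilon_z(L)$ for all $\mathbf{x}\in\{0,1\}^n$. Let $G_z$ be the multilinear relaxation of $f_z$ and let $\widehat{\nabla G_z^L}$ be the polynomial estimator defined below. Then for every $\mathbf{y}\in\mathcal{C}$, $$\big\|\nabla G_z(\mathbf{y})-\widehat{\nabla G_z^L}(\mathbf{y})\big\|_2\le 2\sqrt{n}\,\varepsilon_z(L).$$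
   Context: For $\mathbf{y}\in[0,1]^n$, $\mathbf{x}\sim\mathbf{y}$ denotes a random vector in $\{0,1\}^n$ with independent Bernoulli coordinates, $P(x_i=1)=y_i$. The multilinear relaxation of $f_z$ is $G_z(\mathbf{y})=\mathbb{E}_{\mathbf{x}\sim\mathbf{y}}[f_z(\mathbf{x})]=\sum_{\mathbf{x}\in\{0,1\}^n}f_z(\mathbf{x})\prod_{i}y_i^{x_i}(1-y_i)^{1-x_i}$. For a polynomial $p(\mathbf{y})=c_0+\sum_{\ell}c_\ell\prod_{i\in J_\ell}y_i^{k_i^\ell}$ (with $k_i^\ell\ge1$), its multilinearization is $\dot p(\mathbf{y})=c_0+\sum_\ell c_\ell\prod_{i\in J_\ell}y_i$. For $\mathbf{y}$, $[\mathbf{y}]_{+i}$ and $[\mathbf{y}]_{-i}$ denote $\mathbf{y}$ with the $i$-th coordinate set to $1$ and $0$ respectively. The polynomial estimator is the vector with coordinates $\big(\widehat{\nabla G_z^L}(\mathbf{y})\big)_i=\mathbb{E}_{\mathbf{x}\sim\mathbf{y}}[\hat f_z^L([\mathbf{x}]_{+i})]-\mathbb{E}_{\mathbf{x}\sim\mathbf{y}}[\hat f_z^L([\mathbf{x}]_{-i})]=\dot{\hat f}{}_z^L([\mathbf{y}]_{+i})-\dot{\hat f}{}_z^L([\mathbf{y}]_{-i})$, $i\in V$. $\mathcal{C}\subseteq[0,1]^n$ is a matroid polytope (convex hull of the indicator vectors of the independent sets of a matroid on $V$). *)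

(* Defs.v *)
From HB Require Import structures.
From mathcomp Require Import all_boot all_order all_algebra.
From mathcomp Require Import mpoly.
Set Implicit Arguments. Unset Strict Implicit. Unset Printing Implicit Defensive.
Import Order.TTheory GRing.Theory Num.Theory.
Local Open Scope ring_scope.

Section Defs.
Variables (R : rcfType) (n : nat).

Definition bvec := {ffun 'I_n -> bool}.

Definition bvR (x : bvec) : 'I_n -> R := fun i => (x i)%:R.

Definition bset (x : bvec) (i : 'I_n) (b : bool) : bvec :=
  [ffun j => if j == i then b else x j].

Definition rset (y : 'I_n -> R) (i : 'I_n) (c : R) : 'I_n -> R :=
  fun j => if j == i then c else y j.

Definition bern_weight (y : 'I_n -> R) (x : bvec) : R :=
  \prod_i (if x i then y i else 1 - y i).

Definition bexp (y : 'I_n -> R) (g : bvec -> R) : R :=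
  \sum_(x : bvec) g x * bern_weight y x.

Definition multilinear_relaxation (f : bvec -> R) : {mpoly R[n]} :=
  \sum_(x : bvec) f x *: \prod_i (if x i then 'X_i else 1 - 'X_i).

Definition grad_G (f : bvec -> R) (y : 'I_n -> R) : 'I_n -> R :=
  fun i => (mderiv i (multilinear_relaxation f)).@[y].

Definition poly_estimator (fhat : {mpoly R[n]}) (y : 'I_n -> R) : 'I_n -> R :=
  fun i => bexp y (fun x => fhat.@[bvR (bset x i true)])
         - bexp y (fun x => fhat.@[bvR (bset x i false)]).

Definition norm2 (v : 'I_n -> R) : R := Num.sqrt (\sum_i v i ^+ 2).

Definition is_matroid (I : {set {set 'I_n}}) : Prop :=
  [/\ set0 \in I,
      (forall A B : {set 'I_n}, B \in I -> A \subset B -> A \in I) &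
      (forall A B : {set 'I_n}, A \in I -> B \in I -> (#|A| < #|B|)%N ->
         exists2 e, e \in B :\: A & e |: A \in I)].

Definition indicator (S : {set 'I_n}) : 'I_n -> R := fun i => (i \in S)%:R.

Definition in_matroid_polytope (I : {set {set 'I_n}}) (y : 'I_n -> R) : Prop :=
  exists lam : {set 'I_n} -> R,
    [/\ forall S, 0 <= lam S,
        (forall S, S \notin I -> lam S = 0),
        \sum_(S in I) lam S = 1 &
        forall i, y i = \sum_(S in I) lam S * indicator S i].

Definition tends_to_zero (eps : nat -> R) : Prop :=
  forall e : R, 0 < e -> exists N : nat, forall L : nat, (N <= L)%N -> `|eps L| <= e.

End Defs.

(* Main.v *)
Require Import Defs.
From HB Require Import structures.
From mathcomp Require Import all_boot all_order all_algebra.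
From mathcomp Require Import mpoly.
From mathcomp Require Import ring lra.
Import Order.TTheory GRing.Theory Num.Theory.
Local Open Scope ring_scope.

Section S.
Variables (R : rcfType) (n : nat).

Definition q (x : bvec n) (j : 'I_n) : {mpoly R[n]} := if x j then 'X_j else 1 - 'X_j.

Lemma mderivXU (i j : 'I_n) : mderiv i ('X_j : {mpoly R[n]}) = (j == i)%:R.
Proof.
rewrite /mpolyX mderivX mnm1E.
case: eqP => [->|_]; last by rewrite scale0r.
have -> : (U_(i) - U_(i) = 0)%MM by apply/mnmP=> k; rewrite mnmBE mnm0E subnn.
by rewrite scale1r mpolyX0.

Qed.


Lemma deriv_prod (x : bvec n) (i : 'I_n) (y : 'I_n -> R) :
  (mderiv i (\prod_j q x j)).@[y] =
  (if x i then 1 else -1) * \prod_(j | j != i) (if x j then y j else 1 - y j).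
Proof.
rewrite (bigD1 i) //= mderivM.
have -> : mderiv i (\prod_(j | j != i) q x j) = 0.
  apply: (big_ind (fun p => mderiv i p = 0)).
  - by rewrite -mpolyC1 mderivC.
  - by move=> a b ha hb; rewrite mderivM ha hb mul0r mulr0 addr0.
  move=> j hj; rewrite /q; case: (x j).
    by rewrite mderivXU (negbTE hj).
  by rewrite mderivB mderivXU (negbTE hj) -mpolyC1 mderivC subr0.
rewrite mulr0 addr0 mevalM rmorph_prod /=; congr (_ * _).
  rewrite /q; case: (x i); rewrite ?mderivB mderivXU eqxx.
    by rewrite meval1.
  by rewrite -mpolyC1 mderivC sub0r mevalN meval1.
by apply: eq_bigr => j _; rewrite /q; case: (x j); rewrite ?mevalB ?meval1 mevalXU.
Qed.


Definition W (y : 'I_n -> R) (x : bvec n) := bern_weight y x.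

Lemma bset_id (x : bvec n) i : bset x i (x i) = x.
Proof. by apply/ffunP => j; rewrite ffunE; case: eqP => // ->. Qed.

Lemma bsetK (x : bvec n) i b c : bset (bset x i b) i c = bset x i c.
Proof. by apply/ffunP => j; rewrite !ffunE; case: eqP. Qed.

Lemma bset_at (x : bvec n) i b : bset x i b i = b.
Proof. by rewrite ffunE eqxx. Qed.

Definition flip (i : 'I_n) (x : bvec n) : bvec n := bset x i (~~ x i).

Lemma flipK i : involutive (@flip i).
Proof. by move=> x; rewrite /flip bsetK bset_at negbK bset_id. Qed.

Lemma sum_split i (F : bvec n -> R) :
  \sum_x F x = \sum_(x : bvec n | x i) (F x + F (bset x i false)).
Proof.
rewrite (bigID (fun x : bvec n => x i)) /= big_split /=; congr (_ + _).
rewrite (reindex_inj (inv_inj (flipK i))) /=.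
apply: eq_big => x; first by rewrite /flip bset_at negbK.
by move=> hx; rewrite /flip; move: hx; rewrite bset_at negbK => ->.
Qed.

Definition P (y : 'I_n -> R) i (x : bvec n) :=
  \prod_(j | j != i) (if x j then y j else 1 - y j).

Lemma P_bset y i (x : bvec n) b : P y i (bset x i b) = P y i x.
Proof. by apply: eq_bigr => j hj; rewrite ffunE (negbTE hj). Qed.

Lemma W_split y i (x : bvec n) :
  bern_weight y x = (if x i then y i else 1 - y i) * P y i x.
Proof. by rewrite /bern_weight (bigD1 i). Qed.

Lemma key y i (g : bvec n -> R) :
  \sum_x g x * ((if x i then 1 else -1) * P y i x) =
  bexp y (fun x => g (bset x i true)) - bexp y (fun x => g (bset x i false)).
Proof.
rewrite /bexp (sum_split i) [X in X - _](sum_split i) [X in _ - X](sum_split i).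
rewrite -sumrB; apply: eq_bigr => x hx.
rewrite !(W_split _ i) !bset_at !P_bset !bsetK hx.
have -> : bset x i true = x by rewrite -{2}(bset_id x i) hx.
rewrite mul1r mulN1r; ring.
Qed.

Lemma grad_eq f y i :
  grad_G f y i = \sum_x f x * ((if x i then 1 else -1) * P y i x).
Proof.
rewrite /grad_G /multilinear_relaxation.
rewrite (raddf_sum (mderiv i)) (raddf_sum (meval y)) /=.
apply: eq_bigr => x _; rewrite mderivZ mevalZ.
by rewrite -(deriv_prod x i y).
Qed.

Lemma bexpB y (g1 g2 : bvec n -> R) : bexp y g1 - bexp y g2 = bexp y (fun x => g1 x - g2 x).
Proof. by rewrite /bexp -sumrB; apply: eq_bigr => x _; rewrite mulrBl. Qed.

Lemma bexp_bound y (g : bvec n -> R) e :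
  (forall j, 0 <= y j <= 1) -> (forall x, `|g x| <= e) -> `|bexp y g| <= e.
Proof.
move=> hy hg.
have hW : forall x, 0 <= bern_weight y x.
  move=> x; apply: prodr_ge0 => j _; case: (x j); have /andP[h0 h1] := hy j => //.
  by rewrite subr_ge0.
have hS : \sum_x bern_weight y x = 1.
  rewrite /bern_weight -(bigA_distr_bigA (fun j (b : bool) => if b then y j else 1 - y j)) /=.
  by apply: big1 => j _; rewrite big_bool /= addrC subrK.
apply: (le_trans (ler_norm_sum _ _ _)).
apply: (@le_trans _ _ (\sum_x e * bern_weight y x)).
  apply: ler_sum => x _; rewrite normrM (ger0_norm (hW x)).
  by apply: ler_wpM2r.
by rewrite -mulr_sumr hS mulr1.
Qed.

End S.

Theorem lemma2 (R : rcfType) (n : nat)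
  (I : {set {set 'I_n}}) (hI : is_matroid I)
  (f : bvec n -> R) (hf : forall x, 0 <= f x)
  (fhat : nat -> {mpoly R[n]}) (eps : nat -> R)
  (heps0 : forall L, (1 <= L)%N -> 0 <= eps L)
  (heps : tends_to_zero eps)
  (happrox : forall L, (1 <= L)%N -> forall x : bvec n,
      `|f x - (fhat L).@[bvR R x]| <= eps L) :
  forall L, (1 <= L)%N -> forall y : 'I_n -> R, in_matroid_polytope I y ->
    norm2 (fun i => grad_G f y i - poly_estimator (fhat L) y i)
      <= 2 * Num.sqrt (n%:R) * eps L.
Proof.
move=> L hL y [lam [h0 hn hs hyi]].
have hy01 : forall j, 0 <= y j <= 1.
  move=> j; rewrite hyi; apply/andP; split.
    by apply: sumr_ge0 => S _; apply: mulr_ge0 => //; rewrite /indicator ler0n.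
  rewrite -hs; apply: ler_sum => S _; rewrite -{2}[lam S]mulr1.
  by apply: ler_wpM2l => //; rewrite /indicator; case: (j \in S).
have he := heps0 L hL.
have hi : forall i, `|grad_G f y i - poly_estimator (fhat L) y i| <= 2 * eps L.
  move=> i; rewrite grad_eq key /poly_estimator.
  have -> : forall a b c d : R, a - b - (c - d) = (a - c) - (b - d)
    by move=> a b c d; ring.
  rewrite (@bexpB _ _ y (fun x => f (bset x i true))) (@bexpB _ _ y (fun x => f (bset x i false))).
  apply: (le_trans (ler_normB _ _)).
  by rewrite mulr2n mulrDl mul1r; apply: lerD; apply: bexp_bound => // x;
    apply: happrox.
rewrite /norm2.
apply: (@le_trans _ _ (Num.sqrt (\sum_(i < n) (2 * eps L) ^+ 2))).
  rewrite ler_sqrt; last by apply: sumr_ge0 => i _; apply: sqr_ge0.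
  apply: ler_sum => i _.
  rewrite -real_normK ?num_real // ler_sqr ?nnegrE ?normr_ge0 ?mulr_ge0 //.
rewrite sumr_const card_ord -[_ *+ n]mulr_natl sqrtrM ?ler0n // sqrtr_sqr.
by rewrite ger0_norm ?mulr_ge0 // mulrA [Num.sqrt _ * 2]mulrC.
Qed.
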